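(* Let $\mathbf{A}\in\mathbb{R}^{(\ell m)\times(qn)}$ be a block matrix with $\ell\times q$ blocks of size $m\times n$, and let $\mathbf{B}=\mathbf{S}_{\ell,m}\mathbf{A}\mathbf{S}_{q,n}^\top$. Let $\mathscr{A}$, $\mathscr{B}$, $\mathscr{E}$, $\mathscr{F}$ be the inner blockspan, outer blockspan, outer structure space and inner structure space of $\mathbf{A}$. Then $\mathscr{B}\subseteq\mathscr{E}$ and $\mathscr{A}\subseteq\mathscr{F}$.
   Context: Block conventions: $\mathbf{A}^{(\gamma,\delta)}\in\mathbb{R}^{m\times n}$ is the block of $\mathbf{A}$ in block position $(\gamma,\delta)\in[\ell]\times[q]$, with $\mathbf{A}^{(\gamma,\delta)}_{\alpha\beta}=\mathbf{A}_{(\gamma-1)m+\alpha,(\delta-1)n+\beta}$. For $a,b\ge1$, $s=ab$, the shuffle matrix $\mathbf{S}_{a,b}\in\mathbb{R}^{s\times s}$ has row $(i-1)a+j$ equal to $\mathbf{e}^\top_{(j-1)b+i}$ ($i\in[b]$, $j\in[a]$). $\mathbf{B}\in\mathbb{R}^{(m\ell)\times(nq)}$ is viewed as an $m\times n$ grid of $\ell\times q$ blocks $\mathbf{B}^{(\alpha,\beta)}$, with $\mathbf{B}^{(\alpha,\beta)}_{\gamma\delta}=\mathbf{B}_{(\alpha-1)\ell+\gamma,(\beta-1)q+\delta}$. Let $\mathbf{A}_1,\dots,\mathbf{A}_p$ be the distinct nonzero blocks of $\mathbf{A}$, $\eta_k$ the number of block positions at which $\mathbf{A}_k$ occurs, and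 $\mathbf{E}_k\in\mathbb{R}^{\ell\times q}$ the location-tally matrix with $[\mathbf{E}_k]_{\gamma\delta}=1/\sqrt{\eta_k}$ if $\mathbf{A}^{(\gamma,\delta)}=\mathbf{A}_k$ and $0$ otherwise. Analogously let $\mathbf{B}_1,\dots,\mathbf{B}_\rho$ be the distinct nonzero blocks of $\mathbf{B}$, $\xi_\kappa$ the number of block positions of $\mathbf{B}$ at which $\mathbf{B}_\kappa$ occurs, and $\mathbf{F}_\kappa\in\mathbb{R}^{m\times n}$ with $[\mathbf{F}_\kappa]_{\alpha\beta}=1/\sqrt{\xi_\kappa}$ if $\mathbf{B}^{(\alpha,\beta)}=\mathbf{B}_\kappa$ and $0$ otherwise. Define $\mathscr{A}=\mathrm{span}\{\mathbf{A}_k\}$ (inner blockspan), $\mathscr{B}=\mathrm{span}\{\mathbf{B}_\kappa\}$ (outer blockspan), $\mathscr{E}=\mathrm{span}\{\mathbf{E}_k\}$ (outer structure space), $\mathscr{F}=\mathrm{span}\{\mathbf{F}_\kappa\}$ (inner structure space). *)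

(* Defs.v *)
From HB Require Import structures.
From mathcomp Require Import all_boot all_order all_algebra.
Set Implicit Arguments. Unset Strict Implicit. Unset Printing Implicit Defensive.
Import Order.TTheory GRing.Theory Num.Theory.
Local Open Scope ring_scope.

(* Shuffle matrix S_{a,b} (s = a*b, 0-based indices): row  i*a + j  (i < b, j < a)
   is the unit row vector e_{j*b + i}.  For a row index r, i = r %/ a, j = r %% a. *)
Definition shuffle (R : nzRingType) (a b : nat) : 'M[R]_(a * b) :=
  \matrix_(r < a * b, c < a * b) ((nat_of_ord c == (r %% a) * b + r %/ a)%N%:R).

(* Block (g,d) (of size r x t) of M viewed as a p x s grid of r x t blocks:
   blk M g d a b = M_{g*r + a, d*t + b}  (mxvec_index g a has value g*r+a). *)
Definition blk (R : Type) (p r s t : nat) (M : 'M[R]_(p * r, s * t))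
  (g : 'I_p) (d : 'I_s) : 'M[R]_(r, t) :=
  \matrix_(a < r, b < t) M (mxvec_index g a) (mxvec_index d b).

Definition dblocks (R : nzRingType) (p r s t : nat) (M : 'M[R]_(p * r, s * t))
  : seq 'M[R]_(r, t) :=
  undup [seq X <- [seq blk M x.1 x.2 | x : 'I_p * 'I_s] | X != 0].

Definition occ (R : nzRingType) (p r s t : nat) (M : 'M[R]_(p * r, s * t))
  (X : 'M[R]_(r, t)) : nat :=
  #|[set x : 'I_p * 'I_s | blk M x.1 x.2 == X]|.

Definition tally (R : rcfType) (p r s t : nat) (M : 'M[R]_(p * r, s * t))
  (X : 'M[R]_(r, t)) : 'M[R]_(p, s) :=
  \matrix_(g < p, d < s)
    (if blk M g d == X then (Num.sqrt ((occ M X)%:R))^-1 else 0).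

Definition tallies (R : rcfType) (p r s t : nat) (M : 'M[R]_(p * r, s * t))
  : seq 'M[R]_(p, s) :=
  [seq tally M X | X <- dblocks M].

Definition shufB (R : rcfType) (l m q n : nat) (A : 'M[R]_(l * m, q * n))
  : 'M[R]_(l * m, q * n) :=
  shuffle R l m *m A *m (shuffle R q n)^T.

(* B re-typed so as to be viewed as an m x n grid of l x q blocks
   (same entries, index types 'I_(l*m) ~ 'I_(m*l) cast). *)
Definition Bgrid (R : rcfType) (l m q n : nat) (A : 'M[R]_(l * m, q * n))
  : 'M[R]_(m * l, n * q) :=
  castmx (mulnC l m, mulnC q n) (shufB A).

(* Main.v *)
Require Import Defs.
From HB Require Import structures.
From mathcomp Require Import all_boot all_order all_algebra.
Import Order.TTheory GRing.Theory Num.Theory.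
Local Open Scope ring_scope.
Lemma index_allpairs (T1 T2 : eqType) (s1 : seq T1) (s2 : seq T2) x y :
  x \in s1 -> y \in s2 ->
  index (x, y) [seq (a, b) | a <- s1, b <- s2] = (index x s1 * size s2 + index y s2)%N.
Proof.
move=> + ys2; elim: s1 => [|a s1 IH] //= xin.
rewrite index_cat.
have [->|nxa] := eqVneq a x.
  rewrite ?eqxx mul0n add0n.

  have -> : (x, y) \in [seq (x, b) | b <- s2] by apply: map_f.
  by rewrite index_map //; move=> b c [].
rewrite ?(eq_sym x a) ?(negPf nxa) /=.
have -> : (x, y) \in [seq (a, b) | b <- s2] = false.
  by apply/negP => /mapP [b _ [E _]]; rewrite E eqxx in nxa.
rewrite size_map IH; last by move: xin; rewrite inE eq_sym (negPf nxa).
by rewrite mulSn addnA.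
Qed.

Lemma val_mxvec_index m n (i : 'I_m) (j : 'I_n) :
  nat_of_ord (mxvec_index i j) = (i * n + j)%N.
Proof.
rewrite /mxvec_index /= /enum_rank enum_rank_in.unlock insubdK.
  rewrite enumT unlock /=; change (index (i, j) (prod_enum 'I_m 'I_n) = (i * n + j)%N).
  rewrite /prod_enum index_allpairs ?mem_enum //.
  by rewrite !index_enum_ord size_enum_ord.
by rewrite cardE [_ \in _]index_mem mem_enum.
Qed.

Lemma shuffle_mul (R : rcfType) a b k (M : 'M[R]_((a * b)%N, k)) (r : 'I_(a * b)%N) (c : 'I_k) (r' : 'I_(a * b)%N) :
  nat_of_ord r' = ((r %% a) * b + r %/ a)%N -> (shuffle R a b *m M) r c = M r' c.
Proof.
move=> Hr; rewrite mxE (bigD1 r') //= big1 ?addr0.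
  by rewrite mxE Hr eqxx mul1r.
move=> x Hx; rewrite mxE -Hr.
have -> : (nat_of_ord x == nat_of_ord r') = false by apply/negP => /eqP/val_inj E; rewrite E eqxx in Hx.
by rewrite mul0r.
Qed.

Lemma mul_shuffleT (R : rcfType) a b k (M : 'M[R]_(k, (a * b)%N)) (r : 'I_k) (c : 'I_(a * b)%N) (c' : 'I_(a * b)%N) :
  nat_of_ord c' = ((c %% a) * b + c %/ a)%N -> (M *m (shuffle R a b)^T) r c = M r c'.
Proof.
move=> Hc; rewrite mxE (bigD1 c') //= big1 ?addr0.
  by rewrite !mxE Hc eqxx mulr1.
move=> x Hx; rewrite !mxE -Hc.
have -> : (nat_of_ord x == nat_of_ord c') = false by apply/negP => /eqP/val_inj E; rewrite E eqxx in Hx.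
by rewrite mulr0.
Qed.

Lemma idx_arith l m (g : 'I_l) (a : 'I_m) :
  ((((a * l + g) %% l) * m + (a * l + g) %/ l) = g * m + a)%N.
Proof.
have lpos : (0 < l)%N by apply: leq_ltn_trans (ltn_ord g).
by rewrite modnMDl modn_small // divnMDl // divn_small // addn0.
Qed.

Lemma val_cast k k' (e : k = k') (i : 'I_k) : nat_of_ord (cast_ord e i) = nat_of_ord i.
Proof. by []. Qed.

Lemma BgridE (R : rcfType) (l q m n : nat) (A : 'M[R]_(l * m, q * n)) g d a b :
  blk (Bgrid A) a b g d = blk A g d a b.
Proof.
rewrite /blk /Bgrid /shufB !mxE castmxE /=.
rewrite (@mul_shuffleT _ _ _ _ _ _ _ (mxvec_index d b)); last first.
  by rewrite val_cast !val_mxvec_index idx_arith.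
rewrite (@shuffle_mul _ _ _ _ _ _ _ (mxvec_index g a)) //.
by rewrite val_cast !val_mxvec_index idx_arith.

Qed.
Lemma gen (R : rcfType) (p r s t : nat) (M : 'M[R]_(p * r, s * t)) (N : 'M[R]_(r * p, t * s)) :
  (forall g d a b, blk N a b g d = blk M g d a b) ->
  (<< dblocks N >> <= << tallies M >>)%VS.
Proof.
move=> HNM; apply/span_subvP => X.
rewrite /dblocks mem_undup mem_filter => /andP[_ /mapP[[a b] _ ->]] /=.
have -> : blk N a b = \sum_(Y <- dblocks M) (Y a b * Num.sqrt (Defs.occ M Y)%:R) *: Defs.tally M Y.
  apply/matrixP => g d; rewrite summxE HNM.
  have [Z0|Znz] := eqVneq (blk M g d) 0.
    rewrite Z0 mxE big1_seq //= => Y; rewrite /dblocks mem_undup mem_filter => /andP[Ynz _].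
    rewrite !mxE; case: eqP => [E|_]; last by rewrite mulr0.
    by rewrite -E Z0 eqxx in Ynz.
  have Zin : blk M g d \in dblocks M.
    by rewrite /dblocks mem_undup mem_filter Znz; apply/mapP; exists (g, d); rewrite ?mem_enum.
  rewrite (bigD1_seq _ Zin (undup_uniq _)) /= big1 ?addr0.
    rewrite !mxE eqxx -mulrA mulfV ?mulr1 //.
    rewrite sqrtr_eq0 -ltNge /Defs.occ ltr0n card_gt0; apply/set0Pn; exists (g, d).
    by rewrite inE.
  move=> Y HY; rewrite !mxE; case: eqP => [E|_]; last by rewrite mulr0.
  by rewrite E eqxx in HY.
rewrite big_seq; apply: memv_suml => Y HY; apply: memvZ; apply: memv_span.
by apply/mapP; exists Y.
Qed.

Theorem proposition1 (R : rcfType) (l q m n : nat) (A : 'M[R]_(l * m, q * n)) :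
  (<< dblocks (Bgrid A) >> <= << tallies A >>)%VS /\
  (<< dblocks A >> <= << tallies (Bgrid A) >>)%VS.
Proof.
split; apply: gen => g d a b; by rewrite BgridE.
Qed.
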